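(* Let $\mathcal{A}$ be a family of nonempty subsets of $\mathbb{R}^n$ closed under linear combinations, and let $\mathcal{F}:\mathcal{A}\to\mathbb{R}_{\geqslant0}$ be increasing under set inclusion and sub-homogeneous of degree $1/\alpha$ for some $\alpha>0$. Let $K,L\in\mathcal{A}$ with $\mathcal{F}(K)\mathcal{F}(L)>0$ satisfy, for all $\lambda\in(0,1)$, \[ \mathcal{F}\bigl((1-\lambda)K+\lambda L\bigr)\geqslant C\bigl((1-\lambda)\mathcal{F}(K)^\alpha+\lambda\mathcal{F}(L)^\alpha\bigr)^{1/\alpha}\qquad(\ast) \] for some constant $C>0$. Then for any $p\geqslant1$ and all $\lambda\in(0,1)$, \[ \mathcal{F}\bigl((1-\lambda)\cdot K+_p\lambda\cdot L\bigr)\geqslant C\bigl((1-\lambda)\mathcal{F}(K)^{p\alpha}+\lambda\mathcal{F}(L)^{p\alpha}\bigr)^{1/(p\alpha)} \] whenever $(1-\lambda)\cdot K+_p\lambda\cdot L\in\mathcal{A}$. Moreover, if equality holds for some $\lambda\in(0,1)$ and $p>1$, then $K,L$ satisfy $(\ast)$ with equality for some $\bar\lambda\in(0,1)$; if in addition $\mathcal{F}$ is strictly increasing and $K,L$ are compact, then $\mathrm{conv}\,K$ and $\mathrm{conv}\,L$ contain the origin and are dilatates of each other; and if furthermore $\mathcal{F}$ is strictly sub-homogeneous of degree $1/\alpha$, then $\mathrm{conv}\,K=\mathrm{conv}\,L$.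
   Context: A functional $\mathcal{F}:\mathcal{A}\to\mathbb{R}_{\geqslant0}$ on a family closed under dilatations is sub-homogeneous of degree $1/\alpha$ ($\alpha\neq0$) if $\mathcal{F}(rK)\leqslant r^{1/\alpha}\mathcal{F}(K)$ for all $r\geqslant1$, and strictly sub-homogeneous if the inequality is strict whenever $\mathcal{F}(K)>0$ and $r>1$. Strictly increasing means $A\subsetneq B$ implies $\mathcal{F}(A)<\mathcal{F}(B)$. A dilatate of $A$ is a set $\lambda A$ with $\lambda\geqslant0$; $\mathrm{conv}$ denotes convex hull. For $p>1$, $q$ is the Hölder conjugate ($1/p+1/q=1$); for nonempty $K,L$, $K+_pL=\{(1-\mu)^{1/q}x+\mu^{1/q}y: x\in K, y\in L, \mu\in[0,1]\}$ and $\lambda\cdot K=\lambda^{1/p}K$; for $p=1$ the coefficients $(1-\mu)^{1/q},\mu^{1/q}$ are interpreted as $1$, so $+_1$ is Minkowski addition. *)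

(* Defs.v *)
From HB Require Import structures.
From mathcomp Require Import all_boot all_order all_algebra.
From mathcomp Require Import all_classical all_reals all_analysis.
Set Implicit Arguments. Unset Strict Implicit. Unset Printing Implicit Defensive.
Import Order.TTheory GRing.Theory Num.Theory.
Import numFieldNormedType.Exports.
Local Open Scope classical_set_scope.
Local Open Scope ring_scope.

Section defs.
Variables (R : realType) (n : nat).
Local Notation V := 'rV[R]_n.

Definition dilate (r : R) (K : set V) : set V := [set r *: x | x in K].

Definition msum (K L : set V) : set V := [set x + y | x in K & y in L].

Definition mcomb (a b : R) (K L : set V) : set V := msum (dilate a K) (dilate b L).

Definition psum (p : R) (K L : set V) : set V :=
  if p == 1 then msum K L
  else [set z | exists x y mu, [/\ K x, L y, 0 <= mu <= 1 &
          z = (1 - mu) `^ (1 - p^-1) *: x + mu `^ (1 - p^-1) *: y]].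

Definition pscale (p lambda : R) (K : set V) : set V := dilate (lambda `^ p^-1) K.

Definition convhull (K : set V) : set V :=
  \bigcap_(C in [set C : set V | convex_set (C : set (convex_lmodType V)) /\ K `<=` C]) C.

Definition increasing_on (A : set (set V)) (F : set V -> R) :=
  forall K L, A K -> A L -> K `<=` L -> F K <= F L.

Definition strictly_increasing_on (A : set (set V)) (F : set V -> R) :=
  forall K L, A K -> A L -> K `<=` L -> K != L -> F K < F L.

Definition subhomogeneous_on (A : set (set V)) (F : set V -> R) (alpha : R) :=
  forall K r, A K -> 1 <= r -> F (dilate r K) <= r `^ alpha^-1 * F K.

Definition strictly_subhomogeneous_on (A : set (set V)) (F : set V -> R) (alpha : R) :=
  subhomogeneous_on A F alpha /\
  forall K r, A K -> 0 < F K -> 1 < r -> F (dilate r K) < r `^ alpha^-1 * F K.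

End defs.

(* Main.v *)
Require Import Defs.
From HB Require Import structures.
From mathcomp Require Import all_boot all_order all_algebra.
From mathcomp Require Import all_classical all_reals all_analysis.
From mathcomp Require Import ring lra.
Import Order.TTheory GRing.Theory Num.Theory.
Import numFieldNormedType.Exports.
Local Open Scope classical_set_scope.
Local Open Scope ring_scope.

Set Implicit Arguments. Unset Strict Implicit. Unset Printing Implicit Defensive.

Section geo.
Variables (R : realType) (n : nat).
Local Notation V := 'rV[R]_n.

Definition dot (u x : V) : R := \sum_(i < n) u 0 i * x 0 i.

Lemma sum_continuous (I : eqType) (r : seq I) (f : I -> V -> R) :
  (forall i, continuous (f i)) -> continuous (fun x => \sum_(i <- r) f i x).
Proof.
move=> fc; elim: r => [|a r IH].
  by under eq_fun do rewrite big_nil; exact: cst_continuous.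
under eq_fun do rewrite big_cons.
by move=> x; apply: continuousD; [exact: fc|exact: IH].
Qed.

Lemma dot_continuous u : continuous (dot u).
Proof.
apply: sum_continuous => i x; apply: continuousM; first exact: cst_continuous.
exact: (@coord_continuous R 1 n 0 i).
Qed.

Lemma dotD u x y : dot u (x + y) = dot u x + dot u y.
Proof. by rewrite /dot -big_split /=; apply: eq_bigr => i _; rewrite mxE mulrDr. Qed.
Lemma dotZ u a x : dot u (a *: x) = a * dot u x.
Proof. by rewrite /dot mulr_sumr; apply: eq_bigr => i _; rewrite mxE mulrCA. Qed.
Lemma dotB u x y : dot u (x - y) = dot u x - dot u y.
Proof. by rewrite /dot -sumrB; apply: eq_bigr => i _; rewrite !mxE mulrBr. Qed.
Lemma dot_sum u (I : Type) (r : seq I) (F : I -> V) :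
  dot u (\sum_(i <- r) F i) = \sum_(i <- r) dot u (F i).
Proof.
elim: r => [|a r IH]; first by rewrite !big_nil /dot big1 // => i _; rewrite mxE mulr0.
by rewrite !big_cons dotD IH.
Qed.
Lemma dotC u x : dot u x = dot x u.
Proof. by apply: eq_bigr => i _; rewrite mulrC. Qed.
Lemma dot_ge0 u : 0 <= dot u u.
Proof. by apply: sumr_ge0 => i _; rewrite -expr2 sqr_ge0. Qed.
Lemma dot_gt0 u : u != 0 -> 0 < dot u u.
Proof.
move=> u0; rewrite lt_def dot_ge0 andbT; apply/negP => /eqP.
move/eqP; rewrite psumr_eq0 => [/allP H|i _]; last by rewrite -expr2 sqr_ge0.
apply/negP: u0; rewrite negbK; apply/eqP/rowP => i; rewrite mxE.
have /H : i \in index_enum 'I_n by rewrite mem_index_enum.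
by rewrite -expr2 sqrf_eq0 => /eqP.
Qed.

End geo.

Definition ext (X : Type) m (f : 'I_m -> X) (a : X) : 'I_m.+1 -> X :=
  fun i => if unlift ord_max i is Some j then f j else a.
Lemma ext_max (X : Type) m (f : 'I_m -> X) a : ext f a ord_max = a.
Proof. by rewrite /ext unlift_none. Qed.
Lemma ext_lift (X : Type) m (f : 'I_m -> X) a j : ext f a (lift ord_max j) = f j.
Proof. by rewrite /ext liftK. Qed.
Lemma sum_ordS (Z : nmodType) m (F : 'I_m.+1 -> Z) :
  \sum_(i < m.+1) F i = F ord_max + \sum_(i < m) F (lift ord_max i).
Proof. by rewrite (bigD1_ord ord_max) //. Qed.

Section geo2.
Variables (R : realType) (n : nat).
Local Notation V := 'rV[R]_n.

Definition comb (S : set V) (m : nat) : set V :=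
  [set x | exists t : 'I_m -> R, exists k : 'I_m -> V,
    [/\ forall i, 0 <= t i, \sum_i t i = 1, forall i, S (k i) &
        x = \sum_i t i *: k i]].

Lemma comb1 S : comb S 1 = S.
Proof.
apply/seteqP; split => [x [t [k [t0 t1 kS ->]]]|x Sx].
  by move: t1; rewrite !big_ord1 => ->; rewrite scale1r.
exists (fun _ => 1), (fun _ => x); split => //; first by rewrite big_ord1.
by rewrite big_ord1 scale1r.
Qed.

Definition cstep (p : R * (V * V)) : V := (1 - p.1) *: p.2.1 + p.1 *: p.2.2.

Lemma comb_nonempty S m : S !=set0 -> comb S m.+1 !=set0.
Proof.
move=> [s Ss]; exists s.
exists (fun i => if i == ord0 then 1 else 0), (fun _ => s); split.
- by move=> i; case: ifP.
- by rewrite big_ord_recl eqxx big1 ?addr0 // => i _; rewrite eq_sym (negbTE (neq_lift _ _)).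
- by [].
- rewrite big_ord_recl eqxx scale1r big1 ?addr0 // => i _.
  by rewrite eq_sym (negbTE (neq_lift _ _)) scale0r.
Qed.

Lemma comb_rec S m : S !=set0 ->
  comb S m.+2 = cstep @` (`[0, 1] `*` (comb S m.+1 `*` S)).
Proof.
move=> S0; apply/seteqP; split => [x [t [k [t0 t1 kS ->]]]|].
  rewrite sum_ordS.
  set a := t ord_max.
  have a0 : 0 <= a by exact: t0.
  have hs : \sum_(i < m.+1) t (lift ord_max i) = 1 - a.
    by move: t1; rewrite sum_ordS => <-; rewrite [t ord_max + _]addrC addrK.
  have a1 : a <= 1.
    rewrite -subr_ge0 -hs; exact: sumr_ge0.
  have [a_eq1|a_ne1] := eqVneq a 1.
    have [c cS] := comb_nonempty m S0.
    exists (a, (c, k ord_max)).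
      by split => //=; rewrite in_itv /= a0 a1.
    rewrite /cstep /= a_eq1 subrr scale0r add0r scale1r.
    rewrite big1 ?addr0 ?scale1r //.
    move=> i _; suff -> : t (lift ord_max i) = 0 by rewrite scale0r.
    move: hs; rewrite a_eq1 subrr => /eqP; rewrite psumr_eq0 // => /allP H.
    by apply/eqP/H; rewrite mem_index_enum.
  have ha : 1 - a != 0 by rewrite subr_eq0 eq_sym.
  exists (a, (\sum_(i < m.+1) (t (lift ord_max i) / (1 - a)) *: k (lift ord_max i), k ord_max)).
    split => /=; first by rewrite in_itv /= a0 a1.
    split => //.
    exists (fun i => t (lift ord_max i) / (1 - a)), (fun i => k (lift ord_max i)); split => //.
    - move=> i; apply: divr_ge0 => //; by rewrite subr_ge0.
    - by rewrite -mulr_suml hs divff.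
  rewrite /cstep /= addrC; congr (_ + _).
  rewrite scaler_sumr; apply: eq_bigr => i _.
  by rewrite scalerA mulrCA divff // mulr1.
move=> x [[a [c k]] [/= a01 [[t [k' [t0 t1 kS ->]]] Sk]] <-].
move: a01; rewrite in_itv /= => /andP[a0 a1].
exists (ext (fun i => (1 - a) * t i) a), (ext k' k); split.
- move=> i; rewrite /ext; case: (unlift _ _) => [j|//].
  by apply: mulr_ge0 => //; rewrite subr_ge0.
- rewrite sum_ordS ext_max.
  under eq_bigr do rewrite ext_lift.
  by rewrite -mulr_sumr t1 mulr1 addrC subrK.
- by move=> i; rewrite /ext; case: (unlift _ _).
- rewrite [in RHS]sum_ordS !ext_max /cstep /= addrC; congr (_ + _).
  rewrite scaler_sumr; apply: eq_bigr => i _.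
  by rewrite !ext_lift scalerA.
Qed.

End geo2.

Section geo3.
Variables (R : realType) (n : nat).
Local Notation V := 'rV[R]_n.

Lemma cstep_continuous : continuous (@cstep R n).
Proof.
move=> p; rewrite /cstep.
have c1 : {for p, continuous (fun q : R * (V * V) => q.1)} by exact: cvg_fst.
have c21 : {for p, continuous (fun q : R * (V * V) => q.2.1)}.
  by apply: continuous_comp; [exact: cvg_snd|exact: cvg_fst].
have c22 : {for p, continuous (fun q : R * (V * V) => q.2.2)}.
  by apply: continuous_comp; [exact: cvg_snd|exact: cvg_snd].
apply: (continuousD (f := fun q : R * (V * V) => (1 - q.1) *: q.2.1) (g := fun q => q.1 *: q.2.2)); apply: continuousZ => //.
by apply: continuousB => //; exact: cst_continuous.
Qed.

Lemma comb_compact (S : set V) m : S !=set0 -> compact S -> compact (comb S m.+1).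
Proof.
move=> S0 cS; elim: m => [|m IH]; first by rewrite comb1.
rewrite comb_rec //; apply: continuous_compact.
  by apply: continuous_subspaceT => x; exact: cstep_continuous.
apply: compact_setX; first exact: segment_compact.
exact: compact_setX.
Qed.

End geo3.

Section geo4.
Variables (R : realType) (n : nat).
Local Notation V := 'rV[R]_n.

Definition cvx (C : set V) := forall x y t, C x -> C y -> 0 <= t <= 1 ->
  C (t *: x + (1 - t) *: y).

Lemma cvx_convex_set (C : set V) : cvx C -> convex_set (C : set (convex_lmodType V)).
Proof.
move=> cC x y l; rewrite !inE => Cx Cy.
have := cC x y l%:num Cx Cy; rewrite ge0 le1 => /(_ isT).
by [].
Qed.

Lemma convex_set_cvx (C : set V) : convex_set (C : set (convex_lmodType V)) -> cvx C.
Proof.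
move=> cC x y t Cx Cy /andP[t0 t1].
have := cC x y (Itv01 t0 t1); rewrite !inE => /(_ Cx Cy).
by [].
Qed.

Lemma conv_sub (S : set V) : S `<=` convhull S.
Proof. by move=> x Sx C [_ SC]; exact: SC. Qed.

Lemma conv_min (S C : set V) : cvx C -> S `<=` C -> convhull S `<=` C.
Proof. by move=> cC SC x; apply; split => //; exact: cvx_convex_set. Qed.

Lemma conv_cvx (S : set V) : cvx (convhull S).
Proof.
move=> x y t hx hy t01 C [cC SC].
by apply: (convex_set_cvx cC) => //; [exact: hx|exact: hy].
Qed.


Lemma comb0 (S : set V) : comb S 0 = set0.
Proof.
apply/seteqP; split => // x [t [k [_ t1 _ _]]].
by move: t1; rewrite big_ord0 => /eqP; rewrite eq_sym oner_eq0.
Qed.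

Lemma comb_sub_conv (S : set V) m : S !=set0 -> comb S m `<=` convhull S.
Proof.
move=> S0; case: m => [|m]; first by rewrite comb0.
elim: m => [|m IH]; first by rewrite comb1; exact: conv_sub.
rewrite comb_rec // => _ [[a [c k]] [/= a01 [cc Sk]] <-].
move: a01; rewrite in_itv /= => a01.
rewrite /cstep /= addrC.
have -> : (1 - a) = 1 - a by [].
apply: conv_cvx => //; first exact: conv_sub.
exact: IH.
Qed.

Lemma comb_pad (S : set V) m : S !=set0 -> comb S m `<=` comb S m.+1.
Proof.
move=> [s0 Ss0] x [t [k [t0 t1 kS ->]]].
exists (ext t 0), (ext k s0); split.
- by move=> i; rewrite /ext; case: (unlift _ _).
- by rewrite sum_ordS ext_max add0r; under eq_bigr do rewrite ext_lift.
- by move=> i; rewrite /ext; case: (unlift _ _).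
- rewrite sum_ordS ext_max scale0r add0r.
  by apply: eq_bigr => i _; rewrite !ext_lift.
Qed.

Lemma comb_concat (S : set V) m1 m2 x y a :
  comb S m1 x -> comb S m2 y -> 0 <= a <= 1 ->
  comb S (m1 + m2) (a *: x + (1 - a) *: y).
Proof.
move=> [t [k [t0 t1 kS ->]]] [t' [k' [t0' t1' kS' ->]]] /andP[a0 a1].
have sl (j : 'I_m1) : fintype.split (lshift m2 j) = inl j := unsplitK (inl j).
have sr (j : 'I_m2) : fintype.split (rshift m1 j) = inr j := unsplitK (inr j).
exists (fun i => match fintype.split i with inl j => a * t j | inr j => (1 - a) * t' j end).
exists (fun i => match fintype.split i with inl j => k j | inr j => k' j end).
split.
- move=> i; case: (fintype.split i) => j; apply: mulr_ge0 => //; by rewrite subr_ge0.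
- rewrite big_split_ord /=.
  under eq_bigr do rewrite sl.
  under [X in _ + X]eq_bigr do rewrite sr.
  by rewrite -!mulr_sumr t1 t1' !mulr1 addrC subrK.
- by move=> i; case: (fintype.split i).
- rewrite [RHS]big_split_ord /= !scaler_sumr; congr (_ + _); apply: eq_bigr => i _.
    by rewrite sl scalerA.
  by rewrite sr scalerA.
Qed.


Lemma comb_reduce (S : set V) m : (n.+1 < m.+1)%N -> comb S m.+1 `<=` comb S m.
Proof.
move=> hm x [t [k [t0 t1 kS ->]]].
pose A : 'M[R]_(m.+1, n + 1) := \matrix_(i, j)
  match fintype.split j with inl j' => k i 0 j' | inr _ => 1 end.
have hker : kermx A != 0.
  rewrite -mxrank_eq0 mxrank_ker subn_eq0 -ltnNge.
  by apply: leq_ltn_trans (rank_leq_col A) _; rewrite addn1.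
have [i0 hi0] : exists i, row i (kermx A) != 0.
  case: (pselect (exists i, row i (kermx A) != 0)) => // H; exfalso.
  move/eqP: hker; apply; apply/row_matrixP => i; rewrite row0.
  apply/eqP; apply/negPn/negP => hi; apply: H; by exists i.
set c := row i0 (kermx A).
have cA : c *m A = 0 by apply/sub_kermxP; exact: row_sub.
have sl (j : 'I_n) : fintype.split (lshift 1 j) = inl j := unsplitK (inl j).
have sr (j : 'I_1) : fintype.split (rshift n j) = inr j := unsplitK (inr j).
have hc1 : \sum_i c 0 i *: k i = 0.
  apply/rowP => j; rewrite summxE [RHS]mxE.
  transitivity ((c *m A) 0 (lshift 1 j)); last by rewrite cA mxE.
  by rewrite mxE; apply: eq_bigr => i _; rewrite !mxE sl.
have hc2 : \sum_i c 0 i = 0.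
  transitivity ((c *m A) 0 (rshift n ord0)); last by rewrite cA mxE.
  by rewrite mxE; apply: eq_bigr => i _; rewrite !mxE sr mulr1.
have [ip hip] : exists i, 0 < c 0 i.
  case: (pselect (exists i, 0 < c 0 i)) => // H; exfalso.
  have hle i : c 0 i <= 0.
    by rewrite leNgt; apply/negP => h; apply: H; exists i.
  have : \sum_i (- c 0 i) == 0 by rewrite sumrN hc2 oppr0.
  rewrite psumr_eq0 => [/allP hz|i _]; last by rewrite oppr_ge0.
  move: hi0; rewrite -/c => /negP; apply; apply/eqP/rowP => i.
  rewrite [RHS]mxE.
  by have := hz i (mem_index_enum i); rewrite oppr_eq0 => /eqP.
case: (@arg_minP _ R _ ip (fun i => 0 < c 0 i) (fun i => t i / c 0 i) hip)
  => j hj jmin.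
set tau := t j / c 0 j.
have tau0 : 0 <= tau by apply: divr_ge0 => //; exact: ltW.
pose t' i := t i - tau * c 0 i.
have t'0 i : 0 <= t' i.
  rewrite subr_ge0; case: (ltP 0 (c 0 i)) => hci.
    by have := jmin i hci; rewrite ler_pdivlMr.
  by apply: le_trans (t0 i); exact: mulr_ge0_le0.
have t'j : t' j = 0 by rewrite /t' /tau divfK ?subrr // gt_eqF.
have st' : \sum_i t' i = 1.
  by rewrite /t' sumrB -mulr_sumr hc2 mulr0 subr0.
have sx : \sum_i t' i *: k i = \sum_i t i *: k i.
  rewrite /t'; under eq_bigr do rewrite scalerBl.
  rewrite sumrB; under [X in _ - X]eq_bigr do rewrite -scalerA.
  by rewrite -scaler_sumr hc1 scaler0 subr0.
exists (fun i => t' (lift j i)), (fun i => k (lift j i)); split => //.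
- by move: st'; rewrite (bigD1_ord j) //= t'j add0r.
- by rewrite -sx (bigD1_ord j) //= t'j scale0r add0r.
Qed.

Lemma comb_mono (S : set V) m m' : S !=set0 -> (m <= m')%N -> comb S m `<=` comb S m'.
Proof.
move=> S0; elim: m' => [|m' IH]; first by rewrite leqn0 => /eqP ->.
rewrite leq_eqVlt => /orP[/eqP -> //|]; rewrite ltnS => /IH h.
by move=> x /h; exact: comb_pad.
Qed.

Lemma comb_cara (S : set V) m : S !=set0 -> comb S m `<=` comb S n.+1.
Proof.
move=> S0; elim: m => [|m IH]; first by rewrite comb0.
case: (ltnP n.+1 m.+1) => h.
  by move=> x /(comb_reduce h); exact: IH.
exact: comb_mono.
Qed.

Lemma conv_comb (S : set V) : S !=set0 -> convhull S = comb S n.+1.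
Proof.
move=> S0; apply/seteqP; split; last exact: comb_sub_conv.
apply: conv_min.
  move=> x y t hx hy t01; apply: (comb_cara S0).
  exact: (comb_concat hx hy t01).
by move=> x Sx; apply: (comb_mono S0 (isT : (1 <= n.+1)%N)); rewrite comb1.
Qed.

Lemma conv_compact (S : set V) : S !=set0 -> compact S -> compact (convhull S).
Proof. by move=> S0 cS; rewrite conv_comb //; exact: comb_compact. Qed.

End geo4.

Section geo5.
Variables (R : realType) (n : nat).
Local Notation V := 'rV[R]_n.

Lemma halfspace (S : set V) u c w : convhull S w ->
  (forall s, S s -> dot u s <= c) -> dot u w <= c.
Proof.
move=> hw hS; apply: (@conv_min _ _ S [set v | dot u v <= c]) => //.
move=> x y t /= hx hy /andP[t0 t1].
rewrite dotD !dotZ.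
have : t * dot u x <= t * c by rewrite ler_wpM2l.
have : (1 - t) * dot u y <= (1 - t) * c by rewrite ler_wpM2l // subr_ge0.
lra.
Qed.

Lemma dot_expand (a b : V) (t : R) :
  dot (a + t *: b) (a + t *: b) = dot a a + 2 * t * dot a b + t ^+ 2 * dot b b.
Proof.
have dotDl (x y v : V) : dot (x + y) v = dot x v + dot y v.
  by rewrite dotC dotD !(dotC v).
have dotZl (k : R) (x v : V) : dot (k *: x) v = k * dot x v.
  by rewrite dotC dotZ dotC.
rewrite dotDl !dotD !dotZl !dotZ [dot b a]dotC; lra.
Qed.

Lemma dot_max (S : set V) u : S !=set0 -> compact S ->
  exists2 s, S s & forall s', S s' -> dot u s' <= dot u s.
Proof.
move=> S0 cS.
have [s sS smax] := EVT_max_rV S0 cS (continuous_subspaceT (@dot_continuous R n u)).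
exists s; first by rewrite inE in sS.
by move=> s' hs'; apply: smax; rewrite inE.
Qed.

Lemma separation (S : set V) w : S !=set0 -> compact S -> ~ convhull S w ->
  exists u c, (forall s, S s -> dot u s <= c) /\ c < dot u w.
Proof.
move=> S0 cS nw.
have D0 : convhull S !=set0 by case: S0 => s Ss; exists s; exact: conv_sub.
have cD := conv_compact S0 cS.
have fc : continuous (fun x : V => dot (x - w) (x - w)).
  apply: sum_continuous => i x.
  have ci : {for x, continuous (fun x : V => (x - w) 0 i)}.
    have -> : (fun x : V => (x - w) 0 i) = (fun x => x 0 i - w 0 i).
      by apply/funext => y; rewrite !mxE.
    apply: (continuousB (f := fun x : V => x 0 i) (g := fun _ => w 0 i)).
      exact: (@coord_continuous R 1 n 0 i).
    exact: cst_continuous.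
  exact: continuousM.
have [z zD zmin] := EVT_min_rV D0 cD (continuous_subspaceT fc).
rewrite inE in zD.
set u := w - z.
have u0 : u != 0.
  by rewrite subr_eq0; apply/eqP => wz; apply: nw; rewrite wz.
exists u, (dot u z); split; last first.
  by rewrite -subr_gt0 -dotB; exact: dot_gt0.
move=> s Ss; rewrite -subr_le0 -dotB.
rewrite leNgt; apply/negP => hd.
set d := dot u (s - z) in hd.
set e := dot (s - z) (s - z).
have e0 : 0 <= e by exact: dot_ge0.
set t := d / (e + d).
have ed : 0 < e + d by lra.
have t0 : 0 < t by apply: divr_gt0.
have t1 : t <= 1 by rewrite ler_pdivrMr // mul1r; lra.
have te : t * e <= d.
  rewrite /t mulrAC ler_pdivrMr // ; nra.
have hx : convhull S (t *: s + (1 - t) *: z).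
  apply: conv_cvx => //; first exact: conv_sub.
  by rewrite (ltW t0) t1.
have := zmin _ (mem_set hx).
have -> : t *: s + (1 - t) *: z - w = (z - w) + t *: (s - z).
  rewrite scalerBr scalerBl scale1r addrA [t *: s + z]addrC -!addrA; congr (_ + _).
  by rewrite [RHS]addrCA; congr (_ + _); exact: addrC.
rewrite dot_expand.
have -> : z - w = - u by rewrite opprB.
rewrite -scaleN1r !dotZ [dot (-1 *: u) u]dotC dotZ [dot (-1 *: u) (s - z)]dotC dotZ [dot (s - z) u]dotC -/d -/e.
have := mulr_gt0 t0 hd; have : t * (t * e) <= t * d by rewrite ler_wpM2l // ltW.
nra.
Qed.

Lemma in_conv_of_dot (S : set V) w : S !=set0 -> compact S ->
  (forall u, exists2 s, S s & dot u w <= dot u s) -> convhull S w.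
Proof.
move=> S0 cS H; apply: contrapT => nw.
have [u [c [hs hc]]] := separation S0 cS nw.
have [s Ss hws] := H u.
have := hs s Ss; lra.
Qed.

End geo5.

Section num.
Variable R : realType.
Implicit Types a b r x y : R.

Lemma powR_pos a r : 0 < a -> a `^ r = expR (r * ln a).
Proof. by move=> a0; rewrite /powR gt_eqF. Qed.

Lemma amgm_strict r a b : 0 < r < 1 -> 0 < a -> 0 < b -> a != b ->
  a `^ r * b `^ (1 - r) < r * a + (1 - r) * b.
Proof.
move=> /andP[r0 r1] a0 b0 ab.
rewrite !powR_pos // -expRD.
set A := ln a; set B := ln b; set m := r * A + (1 - r) * B.
have AB : A != B.
  by apply: contra ab => /eqP h; rewrite -[a]lnK ?posrE // -[b]lnK ?posrE // -/A -/B h.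
have hA : A - m != 0.
  have -> : A - m = (1 - r) * (A - B) by rewrite /m; ring.
  by rewrite mulf_eq0 negb_or !subr_eq0 AB andbT eq_sym (lt_eqF r1).
have hB : B - m != 0.
  have -> : B - m = r * (B - A) by rewrite /m; ring.
  by rewrite mulf_eq0 negb_or !subr_eq0 [B == A]eq_sym AB andbT gt_eqF.
have ea : expR A = expR m * expR (A - m) by rewrite -expRD addrC subrK.
have eb : expR B = expR m * expR (B - m) by rewrite -expRD addrC subrK.
have := expR_gt1Dx hA; have := expR_gt1Dx hB.
rewrite -[a]lnK ?posrE // -[b]lnK ?posrE // -/A -/B ea eb.
have em := expR_gt0 m.
set E1 := expR (A - m); set E2 := expR (B - m); set M := expR m.
move=> h2 h1.
have e1 : r * (M * (1 + (A - m))) < r * (M * E1) by rewrite !ltr_pM2l.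
have e2 : (1 - r) * (M * (1 + (B - m))) < (1 - r) * (M * E2).
  by rewrite ltr_pM2l ?subr_gt0 // ltr_pM2l.
have : r * (M * (1 + (A - m))) + (1 - r) * (M * (1 + (B - m))) = M.
  by rewrite /m; ring.
lra.
Qed.

Lemma amgm r a b : 0 < r < 1 -> 0 <= a -> 0 <= b ->
  a `^ r * b `^ (1 - r) <= r * a + (1 - r) * b.
Proof.
move=> /andP[r0 r1] a0 b0.
have r0' : r != 0 by rewrite gt_eqF.
have r1' : 1 - r != 0 by rewrite subr_eq0 eq_sym lt_eqF.
case: (eqVneq a 0) => [->|an0].
  rewrite powR0 // mul0r mulr0 add0r; apply: mulr_ge0 => //; lra.
case: (eqVneq b 0) => [->|bn0].
  rewrite (powR0 r1') mulr0 mulr0 addr0; apply: mulr_ge0 => //; lra.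
have a0' : 0 < a by rewrite lt_def an0.
have b0' : 0 < b by rewrite lt_def bn0.
case: (eqVneq a b) => [<-|ab]; last first.
  by apply: ltW; apply: amgm_strict => //; rewrite r0 r1.
rewrite -powRD; last by rewrite an0 implybT.
by rewrite addrC subrK powRr1 // -mulrDl addrC subrK mul1r.
Qed.

Lemma amgm_strict0 r a b : 0 < r < 1 -> 0 <= a -> 0 <= b -> a != b ->
  a `^ r * b `^ (1 - r) < r * a + (1 - r) * b.
Proof.
move=> /andP[r0 r1] a0 b0 ab.
have r0' : r != 0 by rewrite gt_eqF.
have r1' : 1 - r != 0 by rewrite subr_eq0 eq_sym lt_eqF.
case: (eqVneq a 0) => [a00|an0].
  have b0' : 0 < b by rewrite lt_def b0 andbT eq_sym -a00.
  rewrite a00 powR0 // mul0r mulr0 add0r; apply: mulr_gt0 => //; lra.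
case: (eqVneq b 0) => [->|bn0].
  have a0' : 0 < a by rewrite lt_def an0.
  rewrite (powR0 r1') mulr0 mulr0 addr0; apply: mulr_gt0 => //; lra.
apply: amgm_strict => //; first by rewrite r0 r1.
  by rewrite lt_def an0.
by rewrite lt_def bn0.
Qed.

End num.

Section num2.
Variable R : realType.
Implicit Types a b r x y : R.

Lemma key_part r U T : 0 < U -> 0 < T ->
  U `^ r * (U / T) `^ (1 - r) = U * T `^ r / T.
Proof.
move=> U0 T0.
have UT : 0 < U / T by apply: divr_gt0.
rewrite !powR_pos // lnM ?posrE ?invr_gt0 // lnV ?posrE //.
rewrite -[in RHS](lnK (U0 : U \in Num.pos)) -[T^-1](lnK (_ : T^-1 \in Num.pos)); last by rewrite posrE invr_gt0.
rewrite lnV ?posrE // -!expRD; congr expR; ring.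
Qed.

Lemma key r U W : 0 < U -> 0 < W ->
  U `^ r * (U / (U + W)) `^ (1 - r) + W `^ r * (W / (U + W)) `^ (1 - r) =
  (U + W) `^ r.
Proof.
move=> U0 W0; have T0 : 0 < U + W by rewrite addr_gt0.
rewrite !key_part //; field; by rewrite gt_eqF.
Qed.

Lemma powR_lt1 a t : 0 < a < 1 -> 0 < t -> a `^ t < 1.
Proof.
move=> /andP[a0 a1] t0; rewrite powR_pos // -expR0 ltr_expR.
by rewrite pmulr_rlt0 // ln_lt0 // a0 a1.
Qed.

Lemma powR_gtb a t : 0 < a < 1 -> 0 < t < 1 -> a < a `^ t.
Proof.
move=> /andP[a0 a1] /andP[t0 t1]; rewrite powR_pos //.
rewrite -[X in X < _](lnK (_ : a \in Num.pos)) ?posrE // ltr_expR.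
have : ln a < 0 by rewrite ln_lt0 // a0 a1.
nra.
Qed.

Lemma powR_inv_pow a p : 0 <= a -> 0 < p -> (a `^ p) `^ p^-1 = a.
Proof. by move=> a0 p0; rewrite -powRrM divff ?gt_eqF // powRr1. Qed.


Lemma Gpos (r U W mu : R) : 0 < r < 1 -> 0 < U -> 0 < W -> 0 < mu < 1 ->
  (forall nu, 0 <= nu <= 1 ->
    U `^ r * (1 - nu) `^ (1 - r) + W `^ r * nu `^ (1 - r) <=
    U `^ r * (1 - mu) `^ (1 - r) + W `^ r * mu `^ (1 - r)) ->
  mu = W / (U + W).
Proof.
move=> r01 U0 W0 /andP[mu0 mu1] H.
have T0 : 0 < U + W by rewrite addr_gt0.
have hnu : 1 - W / (U + W) = U / (U + W).
  by field; rewrite gt_eqF.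
apply: contrapT => /eqP mun.
have n01 : 0 <= W / (U + W) <= 1.
  apply/andP; split; first by apply: divr_ge0; apply: ltW.
  by rewrite ler_pdivrMr // mul1r lerDr ltW.
have hU : U `^ r = (U + W) `^ r * (U / (U + W)) `^ r.
  by rewrite -powRM ?divr_ge0 ?ltW // mulrC divfK // gt_eqF.
have hW : W `^ r = (U + W) `^ r * (W / (U + W)) `^ r.
  by rewrite -powRM ?divr_ge0 ?ltW // mulrC divfK // gt_eqF.
have := H _ n01; rewrite hnu key // hU hW -!mulrA => hle.
have s1 : (U / (U + W)) `^ r * (1 - mu) `^ (1 - r) <
          r * (U / (U + W)) + (1 - r) * (1 - mu).
  apply: amgm_strict0 => //; [by apply: divr_ge0; apply: ltW| |].
    by rewrite subr_ge0 ltW.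
  rewrite -hnu; apply: contra mun => /eqP h; apply/eqP.
  by rewrite -[W / _](subKr 1) h subKr.
have s2 : (W / (U + W)) `^ r * mu `^ (1 - r) <= r * (W / (U + W)) + (1 - r) * mu.
  by apply: amgm => //; [apply: divr_ge0; apply: ltW|apply: ltW].
have Tr : 0 < (U + W) `^ r by apply: powR_gt0.
have sr : r * (U / (U + W)) + r * (W / (U + W)) = r.
  by rewrite -mulrDr -mulrDl divff ?mulr1 // gt_eqF.
have : (U + W) `^ r * ((U / (U + W)) `^ r * (1 - mu) `^ (1 - r)) +
       (U + W) `^ r * ((W / (U + W)) `^ r * mu `^ (1 - r)) < (U + W) `^ r.
  rewrite -mulrDr -[X in _ < X]mulr1 ltr_pM2l //.
  clear -s1 s2 sr; lra.
clear -hle; lra.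
Qed.

Lemma cross (lam X Y A B : R) : 0 < lam < 1 -> 0 < X -> 0 < Y -> 0 < A -> 0 < B ->
  lam * Y / ((1 - lam) * X + lam * Y) = lam * B / ((1 - lam) * A + lam * B) ->
  Y * A = B * X.
Proof.
move=> /andP[l0 l1] X0 Y0 A0 B0 /eqP.
have S1 : 0 < (1 - lam) * X + lam * Y by apply: addr_gt0; apply: mulr_gt0 => //; lra.
have S2 : 0 < (1 - lam) * A + lam * B by apply: addr_gt0; apply: mulr_gt0 => //; lra.
rewrite eqr_div ?(gt_eqF S1) ?(gt_eqF S2) // => /eqP h.
have : lam * (1 - lam) * (Y * A - B * X) =
   lam * Y * ((1 - lam) * A + lam * B) - lam * B * ((1 - lam) * X + lam * Y) by ring.
rewrite h subrr => /eqP; rewrite !mulf_eq0 (gt_eqF l0) /= !subr_eq0.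
by rewrite eq_sym (lt_eqF l1) /= => /eqP.
Qed.

Lemma Gmax (p lam x y mu P Q : R) : 1 < p -> 0 < lam < 1 -> 0 < x -> 0 < y ->
  mu = lam * y `^ p / ((1 - lam) * x `^ p + lam * y `^ p) ->
  (forall nu, 0 <= nu <= 1 ->
     (1 - lam) `^ p^-1 * (1 - nu) `^ (1 - p^-1) * P +
       lam `^ p^-1 * nu `^ (1 - p^-1) * Q <=
     (1 - lam) `^ p^-1 * (1 - mu) `^ (1 - p^-1) * P +
       lam `^ p^-1 * mu `^ (1 - p^-1) * Q) ->
  0 <= P /\ P * y = Q * x.
Proof.
move=> p1 /andP[l0 l1] x0 y0 hmu H.
have p0 : 0 < p by lra.
set r := p^-1 in H *.
have r0 : 0 < r by rewrite invr_gt0.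
have r1 : r < 1 by rewrite invf_lt1.
have th0 : 0 < 1 - r by lra.
have th1 : 1 - r < 1 by lra.
have thn0 : 1 - r != 0 by rewrite gt_eqF.
set c0 := (1 - lam) `^ r in H *; set d1 := lam `^ r in H *.
have c00 : 0 < c0 by apply: powR_gt0; lra.
have d10 : 0 < d1 by apply: powR_gt0.
set X := x `^ p in hmu *; set Y := y `^ p in hmu *.
have X0 : 0 < X by apply: powR_gt0.
have Y0 : 0 < Y by apply: powR_gt0.
have S0 : 0 < (1 - lam) * X + lam * Y.
  by apply: addr_gt0; apply: mulr_gt0 => //; lra.
have mu0 : 0 < mu by rewrite hmu; apply: divr_gt0 => //; exact: mulr_gt0.
have mu1 : mu < 1.
  rewrite hmu ltr_pdivrMr // mul1r ltrDr; apply: mulr_gt0 => //; lra.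
have m1a : 0 < 1 - mu < 1 by apply/andP; split; lra.
have ma : 0 < mu < 1 by apply/andP; split.
have e1 := powR_lt1 m1a th0.
have e2 := powR_lt1 ma th0.
have th01 : 0 < 1 - r < 1 by apply/andP.
have e3 := powR_gtb m1a th01.
have e4 := powR_gtb ma th01.
set A1 := (1 - mu) `^ (1 - r) in e1 e3 H; set B1 := mu `^ (1 - r) in e2 e4 H.
have h0 := H 0; rewrite lexx ler01 subr0 powR1 powR0 // in h0.
have {h0}h0 := h0 isT.
have h1 := H 1; rewrite lexx ler01 subrr powR1 powR0 // in h1.
have {h1}h1 := h1 isT.
rewrite !mulr1 !mulr0 !mul0r ?addr0 ?add0r in h0 h1.
have hPQ : (0 < P /\ 0 < Q) \/ (P = 0 /\ Q = 0).
  case: (ltgtP P 0) => hP; case: (ltgtP Q 0) => hQ.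
  - exfalso.
    have a1 : c0 * A1 * P < c0 * (1 - mu) * P.
      by rewrite ltr_nM2r // ltr_pM2l.
    have a2 : d1 * B1 * Q < d1 * mu * Q.
      by rewrite ltr_nM2r // ltr_pM2l.
    have b1 : (1 - mu) * (c0 * P) <= (1 - mu) * (c0 * A1 * P + d1 * B1 * Q).
      by rewrite ler_wpM2l //; lra.
    have b2 : mu * (d1 * Q) <= mu * (c0 * A1 * P + d1 * B1 * Q).
      by rewrite ler_wpM2l //; lra.
    lra.
  - exfalso.
    have a1 : c0 * A1 * P < 0.
      have ca : 0 < c0 * A1 by apply: mulr_gt0 => //; apply: powR_gt0; lra.
      clear -ca hP; nra.
    have a2 : d1 * B1 * Q <= d1 * Q.
      have dq := mulr_gt0 d10 hQ; clear -dq e2; nra.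
    lra.
  - exfalso.
    have a1 : c0 * A1 * P < 0.
      have ca : 0 < c0 * A1 by apply: mulr_gt0 => //; apply: powR_gt0; lra.
      clear -ca hP; nra.
    rewrite hQ in h1 *; lra.
  - exfalso.
    have a1 : c0 * A1 * P < c0 * P.
      have cp := mulr_gt0 c00 hP; clear -cp e1; nra.
    have a2 : d1 * B1 * Q < 0.
      have ca : 0 < d1 * B1 by apply: mulr_gt0 => //; apply: powR_gt0.
      clear -ca hQ; nra.
    lra.
  - by left.
  - exfalso.
    have a1 : c0 * A1 * P < c0 * P.
      have cp := mulr_gt0 c00 hP; clear -cp e1; nra.
    rewrite hQ in h0 *; lra.
  - exfalso; rewrite hP in h0 h1.
    have a2 : d1 * B1 * Q < 0.
      have ca : 0 < d1 * B1 by apply: mulr_gt0 => //; apply: powR_gt0.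
      clear -ca hQ; nra.
    lra.
  - exfalso; rewrite hP in h0 h1.
    have a2 : d1 * B1 * Q < d1 * Q.
      have dq := mulr_gt0 d10 hQ; clear -dq e2; nra.
    lra.
  - by right.
case: hPQ => [[P0 Q0]|[-> ->]]; last by rewrite !mul0r lexx.
split; first exact: ltW.
have U0 : 0 < (1 - lam) * P `^ p by apply: mulr_gt0; [lra|exact: powR_gt0].
have W0 : 0 < lam * Q `^ p by apply: mulr_gt0 => //; exact: powR_gt0.
have cP : c0 * P = ((1 - lam) * P `^ p) `^ r.
  by rewrite powRM ?powR_ge0 ?powR_inv_pow //; lra.
have dQ : d1 * Q = (lam * Q `^ p) `^ r.
  by rewrite powRM ?powR_ge0 ?powR_inv_pow //; exact: ltW.
have r01 : 0 < r < 1 by apply/andP.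
have hm : mu = lam * Q `^ p / ((1 - lam) * P `^ p + lam * Q `^ p).
  apply: Gpos r01 U0 W0 ma _ => nu hn.
  by rewrite -cP -dQ ![c0 * P * _]mulrAC ![d1 * Q * _]mulrAC; exact: H.
have eq1 := cross (introT andP (conj l0 l1)) X0 Y0 (powR_gt0 p P0) (powR_gt0 p Q0) (etrans (esym hmu) hm).
apply: (powR_injective p0); rewrite ?inE ?nnegrE ?mulr_ge0 ?ltW //=.
rewrite !powRM ?ltW // mulrC; exact: eq1.
Qed.

End num2.

Section num3.
Variable R : realType.

Lemma holder1 (p lam nu : R) : 1 < p -> 0 <= lam <= 1 -> 0 <= nu <= 1 ->
  (1 - lam) `^ p^-1 * (1 - nu) `^ (1 - p^-1) + lam `^ p^-1 * nu `^ (1 - p^-1) <= 1.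
Proof.
move=> p1 /andP[l0 l1] /andP[n0 n1].
have r01 : 0 < p^-1 < 1 by rewrite invr_gt0 invf_lt1 ?(lt_trans ltr01) // p1 andbT; lra.
have l0' : 0 <= 1 - lam by lra.
have n0' : 0 <= 1 - nu by lra.
have h1 := amgm r01 l0' n0'; have h2 := amgm r01 l0 n0.
lra.
Qed.


Lemma chain_num (p lam x y mu : R) : 1 < p -> 0 < lam < 1 -> 0 < x -> 0 < y ->
  mu = lam * y `^ p / ((1 - lam) * x `^ p + lam * y `^ p) ->
  (1 - lam) `^ p^-1 * (1 - mu) `^ (1 - p^-1) * x +
    lam `^ p^-1 * mu `^ (1 - p^-1) * y =
  ((1 - lam) * x `^ p + lam * y `^ p) `^ p^-1.
Proof.
move=> p1 /andP[l0 l1] x0 y0 ->.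
have p0 : 0 < p by lra.
have U0 : 0 < (1 - lam) * x `^ p by apply: mulr_gt0; [lra|exact: powR_gt0].
have W0 : 0 < lam * y `^ p by apply: mulr_gt0 => //; exact: powR_gt0.
have T0 := addr_gt0 U0 W0.
have e1 : 1 - lam * y `^ p / ((1 - lam) * x `^ p + lam * y `^ p) =
  (1 - lam) * x `^ p / ((1 - lam) * x `^ p + lam * y `^ p).
  by field; rewrite gt_eqF.
have cx : (1 - lam) `^ p^-1 * x = ((1 - lam) * x `^ p) `^ p^-1.
  by rewrite powRM ?powR_ge0 ?powR_inv_pow ?ltW //; lra.
have dy : lam `^ p^-1 * y = (lam * y `^ p) `^ p^-1.
  by rewrite powRM ?powR_ge0 ?powR_inv_pow ?ltW.
rewrite e1 -(key p^-1 U0 W0) -cx -dy; ring.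
Qed.

Lemma mu_bounds (p lam x y mu : R) : 0 < lam < 1 -> 0 < x -> 0 < y ->
  mu = lam * y `^ p / ((1 - lam) * x `^ p + lam * y `^ p) -> 0 < mu < 1.
Proof.
move=> /andP[l0 l1] x0 y0 ->.
have U0 : 0 < (1 - lam) * x `^ p by apply: mulr_gt0; [lra|exact: powR_gt0].
have W0 : 0 < lam * y `^ p by apply: mulr_gt0 => //; exact: powR_gt0.
apply/andP; split; first by apply: divr_gt0 => //; exact: addr_gt0.
by rewrite ltr_pdivrMr ?addr_gt0 // mul1r ltrDr.
Qed.

End num3.

Section sets.
Variables (R : realType) (n : nat).
Local Notation V := 'rV[R]_n.

Lemma mcombP (a b : R) (M N : set V) z :
  mcomb a b M N z <-> exists k l, [/\ M k, N l & z = a *: k + b *: l].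
Proof.
split; first by move=> [_ [k Mk <-] [_ [l Nl <-] <-]]; exists k, l.
move=> [k [l [Mk Nl ->]]]; exists (a *: k); first by exists k.
by exists (b *: l); first by exists l.
Qed.

Lemma dilate_mcomb (r a b : R) (M N : set V) :
  dilate r (mcomb a b M N) = mcomb (r * a) (r * b) M N.
Proof.
apply/seteqP; split => z.
  move=> [w /mcombP [k [l [Mk Nl ->]]] <-]; apply/mcombP; exists k, l; split => //.
  by rewrite scalerDr !scalerA.
move=> /mcombP [k [l [Mk Nl ->]]]; exists (a *: k + b *: l).
  by apply/mcombP; exists k, l.
by rewrite scalerDr !scalerA.
Qed.

Lemma dilate1 (M : set V) : dilate 1 M = M.
Proof.
apply/seteqP; split => z; first by move=> [w Mw <-]; rewrite scale1r.
by move=> Mz; exists z => //; rewrite scale1r.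
Qed.

Lemma psumP (p : R) (M N : set V) z : p != 1 ->
  psum p M N z <-> exists x y mu, [/\ M x, N y, 0 <= mu <= 1 &
          z = (1 - mu) `^ (1 - p^-1) *: x + mu `^ (1 - p^-1) *: y].
Proof. by move=> p1; rewrite /psum (negbTE p1). Qed.

Lemma psum1 (lam : R) (M N : set V) : 0 <= lam <= 1 ->
  psum 1 (pscale 1 (1 - lam) M) (pscale 1 lam N) = mcomb (1 - lam) lam M N.
Proof.
move=> /andP[l0 l1]; rewrite /psum eqxx /pscale invr1 !powRr1 //.
by rewrite subr_ge0.
Qed.

Lemma mcomb_sub_psum (p lam mu : R) (M N : set V) : p != 1 -> 0 <= mu <= 1 ->
  mcomb ((1 - lam) `^ p^-1 * (1 - mu) `^ (1 - p^-1)) (lam `^ p^-1 * mu `^ (1 - p^-1)) M N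
  `<=` psum p (pscale p (1 - lam) M) (pscale p lam N).
Proof.
move=> p1 mu01 z /mcombP [k [l [Mk Nl ->]]]; apply/psumP => //.
exists ((1 - lam) `^ p^-1 *: k), (lam `^ p^-1 *: l), mu; split => //.
- by exists k.
- by exists l.
- by rewrite !scalerA ![_ `^ p^-1 * _]mulrC.
Qed.

Lemma dot0 (u : V) : dot u 0 = 0.
Proof. by rewrite /dot big1 // => i _; rewrite mxE mulr0. Qed.

Lemma DIL (S T : set V) (r : R) : S !=set0 -> compact S -> T !=set0 -> compact T ->
  0 < r ->
  (forall u, exists s t, [/\ S s, T t, (forall s', S s' -> dot u s' <= dot u s),
        (forall t', T t' -> dot u t' <= dot u t) & dot u t = r * dot u s]) ->
  convhull T = dilate r (convhull S).
Proof.
move=> S0 cS T0 cT r0 H; apply/seteqP; split => w.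
  move=> hw; exists (r^-1 *: w); last by rewrite scalerA divff ?scale1r // gt_eqF.
  apply: in_conv_of_dot => // u.
  have [s [t [Ss Tt smax tmax e]]] := H u.
  exists s => //; rewrite dotZ.
  have := halfspace hw tmax; rewrite e => h.
  by rewrite ler_pdivrMl // ?invr_gt0 // invrK.
move=> [v hv <-]; apply: in_conv_of_dot => // u.
have [s [t [Ss Tt smax tmax e]]] := H u.
exists t => //; rewrite dotZ e ler_pM2l //.
exact: halfspace hv smax.
Qed.

End sets.

Section LBsec.
Variables (R : realType) (n : nat).
Local Notation V := 'rV[R]_n.

Lemma LB (A : set (set V)) (F : set V -> R) (alpha C : R) (K L : set V) (x y a b : R) :
  (forall M N a b, A M -> A N -> 0 <= a -> 0 <= b -> A (mcomb a b M N)) ->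
  0 < alpha -> subhomogeneous_on A F alpha -> A K -> A L ->
  (forall lambda, 0 < lambda < 1 ->
     C * ((1 - lambda) * x + lambda * y) `^ alpha^-1 <= F (mcomb (1 - lambda) lambda K L)) ->
  0 < a -> 0 < b -> a + b <= 1 -> 0 < x -> 0 < y -> 0 < C ->
  [/\ C * (a * x + b * y) `^ alpha^-1 =
        (a + b) `^ alpha^-1 * (C * ((1 - b / (a + b)) * x + b / (a + b) * y) `^ alpha^-1),
      C * ((1 - b / (a + b)) * x + b / (a + b) * y) `^ alpha^-1 <=
        F (mcomb (1 - b / (a + b)) (b / (a + b)) K L),
      (a + b) `^ alpha^-1 * F (mcomb (1 - b / (a + b)) (b / (a + b)) K L) <=
        F (mcomb a b K L),
      0 < b / (a + b) < 1 &
      dilate (a + b)^-1 (mcomb a b K L) = mcomb (1 - b / (a + b)) (b / (a + b)) K L].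
Proof.
move=> HA Hal Hsub AK AL Hstar a0 b0 s1 x0 y0 C0.
have s0 : 0 < a + b by rewrite addr_gt0.
have sn0 : a + b != 0 by rewrite gt_eqF.
have e1 : 1 - b / (a + b) = (a + b)^-1 * a by field.
have e2 : b / (a + b) = (a + b)^-1 * b by rewrite mulrC.
have t01 : 0 < b / (a + b) < 1.
  by rewrite divr_gt0 //= ltr_pdivrMr // mul1r ltrDr.
have dil : dilate (a + b)^-1 (mcomb a b K L) = mcomb (1 - b / (a + b)) (b / (a + b)) K L.
  by rewrite dilate_mcomb e1 e2.
split => //; last 2 first.
- by apply: Hstar.
- rewrite -dil.
  have h := Hsub (mcomb a b K L) (a + b)^-1 (HA _ _ _ _ AK AL (ltW a0) (ltW b0)).
  have : 1 <= (a + b)^-1 by rewrite invf_ge1.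
  move/h => {}h.
  have se : 0 < (a + b) `^ alpha^-1 by apply: powR_gt0.
  have ee : (a + b) `^ alpha^-1 * (a + b)^-1 `^ alpha^-1 = 1.
    rewrite -powRM ?invr_ge0 ?(ltW s0) // divff //.
    by rewrite powR1.
  by have := ler_wpM2l (ltW se) h; rewrite mulrA ee mul1r.
- rewrite mulrCA -powRM ?ltW //; last first.
    case/andP: t01 => t0 t1.
    by apply: addr_gt0; apply: mulr_gt0 => //; rewrite subr_gt0.
  congr (_ * _ `^ _); rewrite e1 e2; field; exact: sn0.
Qed.

End LBsec.


Unset Implicit Arguments. Set Strict Implicit. Set Printing Implicit Defensive.

Theorem mainTheorem3 (R : realType) (n : nat)
  (A : set (set 'rV[R]_n)) (F : set 'rV[R]_n -> R) (alpha C : R)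
  (K L : set 'rV[R]_n) :
  (forall M, A M -> M !=set0) ->
  (forall M N a b, A M -> A N -> 0 <= a -> 0 <= b -> A (mcomb a b M N)) ->
  (forall M, A M -> 0 <= F M) ->
  increasing_on A F ->
  0 < alpha ->
  subhomogeneous_on A F alpha ->
  A K -> A L -> 0 < F K * F L ->
  0 < C ->
  (forall lambda, 0 < lambda < 1 ->
     F (mcomb (1 - lambda) lambda K L) >=
     C * ((1 - lambda) * F K `^ alpha + lambda * F L `^ alpha) `^ alpha^-1) ->
  (forall p lambda, 1 <= p -> 0 < lambda < 1 ->
     A (psum p (pscale p (1 - lambda) K) (pscale p lambda L)) ->
     F (psum p (pscale p (1 - lambda) K) (pscale p lambda L)) >=
     C * ((1 - lambda) * F K `^ (p * alpha) + lambda * F L `^ (p * alpha))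
           `^ (p * alpha)^-1)
  /\
  (forall p lambda, 1 < p -> 0 < lambda < 1 ->
     A (psum p (pscale p (1 - lambda) K) (pscale p lambda L)) ->
     F (psum p (pscale p (1 - lambda) K) (pscale p lambda L)) =
     C * ((1 - lambda) * F K `^ (p * alpha) + lambda * F L `^ (p * alpha))
           `^ (p * alpha)^-1 ->
     (exists lambdab, 0 < lambdab < 1 /\
        F (mcomb (1 - lambdab) lambdab K L) =
        C * ((1 - lambdab) * F K `^ alpha + lambdab * F L `^ alpha) `^ alpha^-1)
     /\
     (strictly_increasing_on A F -> compact K -> compact L ->
        [/\ convhull K 0, convhull L 0,
            (exists a, 0 <= a /\ convhull K = dilate a (convhull L)),
            (exists b, 0 <= b /\ convhull L = dilate b (convhull K)) &
            (strictly_subhomogeneous_on A F alpha -> convhull K = convhull L)])).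
Proof.
move=> Hne HA HF0 Hinc Hal Hsub AK AL HFKL HC Hstar.
have FK0 : 0 < F K.
  rewrite lt_def HF0 // andbT; apply/negP => /eqP h; move: HFKL.
  by rewrite h mul0r ltxx.
have FL0 : 0 < F L.
  rewrite lt_def HF0 // andbT; apply/negP => /eqP h; move: HFKL.
  by rewrite h mulr0 ltxx.
have [x hx] : exists x, x = F K `^ alpha by eexists.
have [y hy] : exists y, y = F L `^ alpha by eexists.
have x0 : 0 < x by rewrite hx powR_gt0.
have y0 : 0 < y by rewrite hy powR_gt0.
have Hstar' : forall lambda, 0 < lambda < 1 ->
    C * ((1 - lambda) * x + lambda * y) `^ alpha^-1 <= F (mcomb (1 - lambda) lambda K L).
  by move=> l hl; rewrite hx hy; exact: Hstar.
have ai0 : 0 < alpha^-1 by rewrite invr_gt0.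
have rhsE : forall p lambda, 0 < p ->
    C * ((1 - lambda) * F K `^ (p * alpha) + lambda * F L `^ (p * alpha)) `^ (p * alpha)^-1
    = C * (((1 - lambda) * x `^ p + lambda * y `^ p) `^ p^-1) `^ alpha^-1.
  move=> p lambda p0; rewrite hx hy -!powRrM ![alpha * p]mulrC.
  by rewrite invfM.
have CH : forall p lambda, 1 < p -> 0 < lambda < 1 ->
  exists a b mu, [/\ 0 < a, 0 < b, a + b <= 1, 0 < mu < 1 &
    [/\ a = (1 - lambda) `^ p^-1 * (1 - mu) `^ (1 - p^-1),
    b = lambda `^ p^-1 * mu `^ (1 - p^-1),
    mu = lambda * y `^ p / ((1 - lambda) * x `^ p + lambda * y `^ p) &
    C * ((1 - lambda) * F K `^ (p * alpha) + lambda * F L `^ (p * alpha)) `^ (p * alpha)^-1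
      = C * (a * x + b * y) `^ alpha^-1]].
  move=> p lambda p1 l01.
  have [mu hmu] : exists mu, mu = lambda * y `^ p / ((1 - lambda) * x `^ p + lambda * y `^ p).
    by eexists.
  have mu01 := mu_bounds l01 x0 y0 hmu.
  exists ((1 - lambda) `^ p^-1 * (1 - mu) `^ (1 - p^-1)),
    (lambda `^ p^-1 * mu `^ (1 - p^-1)), mu.
  case/andP: l01 => l0 l1; case/andP: mu01 => m0 m1.
  split => //; last split => //.
  - by apply: mulr_gt0; apply: powR_gt0; rewrite subr_gt0.
  - by apply: mulr_gt0; apply: powR_gt0.
  - by apply: holder1 => //; rewrite ?ltW ?l0 ?l1 ?m0 ?m1.
  - by apply/andP.
  - rewrite rhsE; last by apply: lt_trans p1.
    by rewrite -(chain_num p1 _ x0 y0 hmu) // l0 l1.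
split.
- move=> p lambda p1 l01 Apsum.
  case: (eqVneq p 1) => [->|pn1].
    rewrite psum1; last by case/andP: l01 => ? ?; rewrite !ltW.
    by rewrite !mul1r; exact: Hstar.
  have p1' : 1 < p by rewrite lt_neqAle eq_sym pn1 p1.
  have [a [b [mu [a0 b0 ab1 mu01 [ha hb hmu E]]]]] := CH p lambda p1' l01.
  rewrite E.
  have [E1 E2 E3 t01 dil] := LB HA Hal Hsub AK AL Hstar' a0 b0 ab1 x0 y0 HC.
  have sub : mcomb a b K L `<=` psum p (pscale p (1 - lambda) K) (pscale p lambda L).
    by rewrite ha hb; apply: mcomb_sub_psum => //; case/andP: mu01 => ? ?; rewrite !ltW.
  have AM : A (mcomb a b K L) := HA _ _ _ _ AK AL (ltW a0) (ltW b0).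
  have hin := Hinc _ _ AM Apsum sub.
  have se : 0 < (a + b) `^ alpha^-1 by apply: powR_gt0; rewrite addr_gt0.
  rewrite E1; apply: le_trans (ler_wpM2l (ltW se) E2) _.
  exact: le_trans E3 hin.
- move=> p lambda p1 l01 Apsum Eq.
  have pn1 : p != 1 by rewrite gt_eqF.
  have [a [b [mu [a0 b0 ab1 mu01 [ha hb hmu E]]]]] := CH p lambda p1 l01.
  have [E1 E2 E3 t01 dil] := LB HA Hal Hsub AK AL Hstar' a0 b0 ab1 x0 y0 HC.
  have sub : mcomb a b K L `<=` psum p (pscale p (1 - lambda) K) (pscale p lambda L).
    by rewrite ha hb; apply: mcomb_sub_psum => //; case/andP: mu01 => ? ?; rewrite !ltW.
  have AM : A (mcomb a b K L) := HA _ _ _ _ AK AL (ltW a0) (ltW b0).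
  have hin := Hinc _ _ AM Apsum sub.
  have se : 0 < (a + b) `^ alpha^-1 by apply: powR_gt0; rewrite addr_gt0.
  rewrite E E1 in Eq.
  have chainle := le_trans (ler_wpM2l (ltW se) E2) E3.
  split.
    exists (b / (a + b)); split => //.
    rewrite -hx -hy; apply/eqP; rewrite eq_le E2 andbT.
    rewrite -(ler_pM2l se); apply: le_trans E3 _; by rewrite -Eq.
  move=> Hsi cK cL.
  have Meq : mcomb a b K L = psum p (pscale p (1 - lambda) K) (pscale p lambda L).
    case: (eqVneq (mcomb a b K L) (psum p (pscale p (1 - lambda) K) (pscale p lambda L))) => // hne.
    exfalso; have := Hsi _ _ AM Apsum sub hne; rewrite Eq.
    by rewrite ltNge chainle.
  have SUP : forall u, exists kU lU, [/\ K kU, L lU,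
      (forall k, K k -> dot u k <= dot u kU), (forall l, L l -> dot u l <= dot u lU) &
      0 <= dot u kU /\ dot u kU * y = dot u lU * x].
    move=> u.
    have [kU KkU kmax] := dot_max u (Hne K AK) cK.
    have [lU LlU lmax] := dot_max u (Hne L AL) cL.
    exists kU, lU.
    have G : 0 <= dot u kU /\ dot u kU * y = dot u lU * x.
      apply: (Gmax p1 l01 x0 y0 hmu) => nu hnu.
      have : psum p (pscale p (1 - lambda) K) (pscale p lambda L)
          ((1 - nu) `^ (1 - p^-1) *: ((1 - lambda) `^ p^-1 *: kU) +
           nu `^ (1 - p^-1) *: (lambda `^ p^-1 *: lU)).
        apply/psumP => //; exists ((1 - lambda) `^ p^-1 *: kU), (lambda `^ p^-1 *: lU), nu.
        by split => //; [exists kU|exists lU].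
      rewrite -Meq => /mcombP [k [l [Kk Ll e]]].
      have := congr1 (dot u) e; rewrite !dotD !dotZ => de.
      have h1 : a * dot u k <= a * dot u kU by apply: ler_wpM2l; [exact: ltW | exact: kmax].
      have h2 : b * dot u l <= b * dot u lU by apply: ler_wpM2l; [exact: ltW | exact: lmax].
      rewrite -ha -hb.
      move: de h1 h2; clear; move=> de h1 h2; lra.
    by split.
  have Q0 : forall u kU lU : 'rV[R]_n, 0 <= dot u kU -> dot u kU * y = dot u lU * x -> 0 <= dot u lU.
    move=> u kU lU P0 PQ.
    have h : 0 <= dot u lU * x by rewrite -PQ mulr_ge0 // ltW.
    by rewrite pmulr_lge0 in h.
  have dilK : convhull K = dilate (x / y) (convhull L).
    apply: DIL (Hne L AL) cL (Hne K AK) cK (divr_gt0 x0 y0) _ => u.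
    have [kU [lU [KkU LlU km lm [P0 PQ]]]] := SUP u.
    exists lU, kU; split => //.
    apply: (mulIf (lt0r_neq0 y0)); rewrite PQ; field; by rewrite ?(gt_eqF x0) ?(gt_eqF y0).
  have dilL : convhull L = dilate (y / x) (convhull K).
    apply: DIL (Hne K AK) cK (Hne L AL) cL (divr_gt0 y0 x0) _ => u.
    have [kU [lU [KkU LlU km lm [P0 PQ]]]] := SUP u.
    exists kU, lU; split => //.
    apply: (mulIf (lt0r_neq0 x0)); rewrite -PQ; field; by rewrite ?(gt_eqF x0) ?(gt_eqF y0).
  split.
  - apply: in_conv_of_dot (Hne K AK) cK _ => u.
    have [kU [lU [KkU LlU km lm [P0 PQ]]]] := SUP u.
    by exists kU => //; rewrite dot0.
  - apply: in_conv_of_dot (Hne L AL) cL _ => u.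
    have [kU [lU [KkU LlU km lm [P0 PQ]]]] := SUP u.
    by exists lU => //; rewrite dot0; exact: Q0 P0 PQ.
  - by exists (x / y); split => //; apply: ltW; apply: divr_gt0.
  - by exists (y / x); split => //; apply: ltW; apply: divr_gt0.
  move=> [Hsh Hss].
  have s0 : 0 < a + b by rewrite addr_gt0.
    have s1 : a + b = 1.
    apply/eqP; rewrite eq_le ab1 /= leNgt; apply/negP => slt.
    have FM0 : 0 < F (mcomb a b K L).
      rewrite Meq Eq; apply: mulr_gt0 => //; apply: mulr_gt0 => //.
      case/andP: t01 => t0 t1.
      by apply: powR_gt0; apply: addr_gt0; apply: mulr_gt0 => //; rewrite subr_gt0.
    have := Hss _ (a + b)^-1 AM FM0; rewrite invf_gt1 // => /(_ slt).
    rewrite dil => h.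
    have ee : (a + b) `^ alpha^-1 * (a + b)^-1 `^ alpha^-1 = 1.
      rewrite -powRM ?invr_ge0 ?(ltW s0) // divff ?gt_eqF //.
      by rewrite powR1.
    have := ltr_pM2l se; move=> /(_ (F (mcomb (1 - b / (a + b)) (b / (a + b)) K L))) h'.
    have := h; rewrite -h' mulrA ee mul1r => h2.
    have : F (mcomb a b K L) <= (a + b) `^ alpha^-1 * F (mcomb (1 - b / (a + b)) (b / (a + b)) K L).
      by rewrite Meq Eq ler_pM2l.
    by rewrite leNgt h2.
  have xy : 1 * y = 1 * x.
    have := @Gmax _ p lambda x y mu 1 1 p1 l01 x0 y0 hmu.
    rewrite !mulr1 -ha -hb s1 => G.
    case: G => // nu hnu; rewrite !mulr1; apply: holder1 => //.
    by case/andP: l01 => ? ?; rewrite !ltW.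
  rewrite !mul1r in xy.
  by rewrite dilK xy divff ?gt_eqF // dilate1.
Qed.
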